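(* Under the standing assumptions below, let $\{\pi_k\}$ be the sequence generated by the trust-region method described in the context, and assume $\mathbb A^*_{\pi_k}>0$ for all $k$ (so that every ratio $r_k$ is well defined). Then (1) $\liminf_{k\to\infty}\mathbb A^*_{\pi_k}=0$; (2) $\lim_{k\to\infty}\eta(\pi_k)=\eta(\pi^* )$, where $\pi^*$ is an optimal solution of $\max_{\pi\in\Pi}\eta(\pi)$.
   Context: Consider an infinite-horizon discounted Markov decision process $(\mathcal S,\mathcal A,P,r,\rho_0,\gamma)$ with finite state space $\mathcal S$, finite action space $\mathcal A$, transition probabilities $P(s'|s,a)$, bounded reward function $r:\mathcal S\times\mathcal A\to\mathbb R$, initial-state distribution $\rho_0$ with $\rho_0(s)>0$ for all $s\in\mathcal S$, and discount factor $\gamma\in(0,1)$. A policy $\pi$ assigns to each state $s$ a probability distribution $\pi(\cdot|s)$ on $\mathcal A$; $\Pi$ denotes the set of all policies. The total expected reward is $\eta(\pi)=\mathbb E_\pi[\sum_{t=0}^\infty\gamma^t r(s_t,a_t)]$, where $s_0\sim\rho_0$, $a_t\sim\pi(\cdot|s_t)$, $s_{t+1}\sim P(\cdot|s_t,a_t)$. The unnormalized discounted visitation frequency is $\rho_\pi(s)=\sum_{t=0}^\infty\gamma^t\mathbb P(s_t=s\mid\pi)$. $Q_\pi(s,a)=\mathbb E_\pi[\sum_{l\ge0}\gamma^l r(s_l,a_l)\mid s_0=s,a_0=a]$, $V_\pi(s)=\mathbb E_\pi[\sum_{l\ge0}\gamma^l r(s_l,a_l)\mid s_0=s]$, and the advantage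 is $A_\pi(s,a)=Q_\pi(s,a)-V_\pi(s)$. The surrogate function is $L_\pi(\tilde\pi)=\eta(\pi)+\sum_s\rho_\pi(s)\sum_a\tilde\pi(a|s)A_\pi(s,a)$. The policy advantage of $\pi'$ with respect to $\pi$ is $\mathbb A_\pi(\pi')=\sum_s\rho_\pi(s)\sum_a\pi'(a|s)A_\pi(s,a)$, and $\mathbb A^*_\pi=\max_{\pi'\in\Pi}\mathbb A_\pi(\pi')$. The total variation distance is $D_{TV}(p\|q)=\frac12\sum_x|p(x)-q(x)|$. Trust-region method: fix constants $0<\beta_0<\beta_1<1$ and $0<\gamma_3<\gamma_2\le1<\gamma_1$, an initial policy $\pi_0$ and radius $\delta_0>0$. At iteration $k$, let $\tilde\pi_{k+1}$ be an optimal solution of $\max_{\pi\in\Pi}L_{\pi_k}(\pi)$ subject to $\sum_s\rho_{\pi_k}(s)D_{TV}(\pi_k(\cdot|s)\|\pi(\cdot|s))\le\delta_k$; compute $r_k=\frac{\eta(\tilde\pi_{k+1})-\eta(\pi_k)}{L_{\pi_k}(\tilde\pi_{k+1})-L_{\pi_k}(\pi_k)}$; set $\pi_{k+1}=\tilde\pi_{k+1}$ if $r_k\ge\beta_0$ and $\pi_{k+1}=\pi_k$ otherwise; set $\delta_{k+1}=\gamma_1\delta_k$ if $r_k\ge\beta_1$, $\delta_{k+1}=\gamma_2\delta_k$ if $r_k\in[\beta_0,\beta_1)$, and $\delta_{k+1}=\gamma_3\delta_k$ otherwise. *)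

(* Defs.v *)
From Stdlib Require Import Reals Lra ClassicalEpsilon.
Open Scope R_scope.

(* A finite MDP: states are 0..nS-1, actions are 0..nA-1.
   mP s a s' = P(s'|s,a); mr s a = r(s,a); mrho0 s = rho_0(s); mgamma = gamma. *)
Record MDP := mkMDP {
  nS : nat; nA : nat;
  mP : nat -> nat -> nat -> R;
  mr : nat -> nat -> R;
  mrho0 : nat -> R;
  mgamma : R }.

Fixpoint fsum (n : nat) (f : nat -> R) : R :=
  match n with O => 0 | S n' => fsum n' f + f n' end.

Definition mdp_wf (M : MDP) : Prop :=
  0 < mgamma M < 1 /\
  (forall s, (s < nS M)%nat -> 0 < mrho0 M s) /\
  fsum (nS M) (mrho0 M) = 1 /\
  (forall s a, (s < nS M)%nat -> (a < nA M)%nat ->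
     (forall s', (s' < nS M)%nat -> 0 <= mP M s a s') /\
     fsum (nS M) (mP M s a) = 1).

(* A (stochastic, stationary) policy: pi s a = pi(a|s). *)
Definition policy := nat -> nat -> R.

Definition is_policy (M : MDP) (pi : policy) : Prop :=
  forall s, (s < nS M)%nat ->
    (forall a, (a < nA M)%nat -> 0 <= pi s a) /\ fsum (nA M) (pi s) = 1.

Definition Lim (u : nat -> R) : R :=
  epsilon (inhabits 0) (fun l => Un_cv u l).

Definition series_sum (u : nat -> R) : R := Lim (fun n => sum_f_R0 u n).

Definition kron (i j : nat) : R := if Nat.eqb i j then 1 else 0.

(* sa_dist M pi mu t s a = P(s_t = s, a_t = a) when (s_0,a_0) ~ mu and
   a_t ~ pi(.|s_t), s_{t+1} ~ P(.|s_t,a_t) for t >= 1. *)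
Fixpoint sa_dist (M : MDP) (pi : policy) (mu : nat -> nat -> R) (t : nat)
  : nat -> nat -> R :=
  match t with
  | O => mu
  | S t' => fun s' a' =>
      pi s' a' * fsum (nS M) (fun s => fsum (nA M) (fun a =>
                   sa_dist M pi mu t' s a * mP M s a s'))
  end.

Definition ret (M : MDP) (pi : policy) (mu : nat -> nat -> R) : R :=
  series_sum (fun t => mgamma M ^ t *
    fsum (nS M) (fun s => fsum (nA M) (fun a => sa_dist M pi mu t s a * mr M s a))).

Definition init_sa (M : MDP) (pi : policy) : nat -> nat -> R :=
  fun s a => mrho0 M s * pi s a.

Definition eta (M : MDP) (pi : policy) : R := ret M pi (init_sa M pi).

Definition state_prob (M : MDP) (pi : policy) (t s : nat) : R :=
  fsum (nA M) (fun a => sa_dist M pi (init_sa M pi) t s a).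

Definition rho_vis (M : MDP) (pi : policy) (s : nat) : R :=
  series_sum (fun t => mgamma M ^ t * state_prob M pi t s).

Definition Vf (M : MDP) (pi : policy) (s : nat) : R :=
  ret M pi (fun s' a => kron s' s * pi s a).

Definition Qf (M : MDP) (pi : policy) (s a : nat) : R :=
  ret M pi (fun s' a' => kron s' s * kron a' a).

Definition Adv (M : MDP) (pi : policy) (s a : nat) : R := Qf M pi s a - Vf M pi s.

Definition PolAdv (M : MDP) (pi pi' : policy) : R :=
  fsum (nS M) (fun s => rho_vis M pi s *
    fsum (nA M) (fun a => pi' s a * Adv M pi s a)).

Definition Lsur (M : MDP) (pi pi' : policy) : R := eta M pi + PolAdv M pi pi'.

Definition Astar (M : MDP) (pi : policy) : R :=
  epsilon (inhabits 0) (fun v =>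
    (exists pi', is_policy M pi' /\ PolAdv M pi pi' = v) /\
    (forall pi', is_policy M pi' -> PolAdv M pi pi' <= v)).

Definition dTV (M : MDP) (p q : nat -> R) : R :=
  / 2 * fsum (nA M) (fun a => Rabs (p a - q a)).

Definition avgTV (M : MDP) (pik pi : policy) : R :=
  fsum (nS M) (fun s => rho_vis M pik s * dTV M (pik s) (pi s)).

Definition subproblem_solution (M : MDP) (pik : policy) (d : R) (pi : policy) : Prop :=
  is_policy M pi /\ avgTV M pik pi <= d /\
  (forall pi', is_policy M pi' -> avgTV M pik pi' <= d -> Lsur M pik pi' <= Lsur M pik pi).

Definition ratio (M : MDP) (pik pit : policy) : R :=
  (eta M pit - eta M pik) / (Lsur M pik pit - Lsur M pik pik).

(* pik k = pi_k, pit k = tilde pi_{k+1}, delta k = delta_k *)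
Definition trust_region_run (M : MDP) (b0 b1 g1 g2 g3 d0 : R) (pi0 : policy)
  (pik pit : nat -> policy) (delta : nat -> R) : Prop :=
  pik O = pi0 /\ delta O = d0 /\
  forall k,
    subproblem_solution M (pik k) (delta k) (pit k) /\
    let rk := ratio M (pik k) (pit k) in
    (b0 <= rk -> pik (S k) = pit k) /\
    (rk < b0 -> pik (S k) = pik k) /\
    (b1 <= rk -> delta (S k) = g1 * delta k) /\
    (b0 <= rk < b1 -> delta (S k) = g2 * delta k) /\
    (rk < b0 -> delta (S k) = g3 * delta k).

Definition liminf_is (u : nat -> R) (l : R) : Prop :=
  forall eps, 0 < eps ->
    (exists N, forall k, (N <= k)%nat -> l - eps < u k) /\
    (forall N, exists k, (N <= k)%nat /\ u k < l + eps).

Definition optimal_policy (M : MDP) (pi : policy) : Prop :=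
  is_policy M pi /\ forall pi', is_policy M pi' -> eta M pi' <= eta M pi.

(* Main.v *)
Require Import Defs.
From Stdlib Require Import Reals Lra Lia ClassicalEpsilon Classical FunctionalExtensionality ZArith.
Open Scope R_scope.


Lemma fsum_ext n f g : (forall i, (i < n)%nat -> f i = g i) -> fsum n f = fsum n g.
Proof. induction n; simpl; intros H; auto. rewrite IHn by (intros; apply H; lia). rewrite H by lia; auto. Qed.

Lemma fsum_plus n f g : fsum n (fun i => f i + g i) = fsum n f + fsum n g.
Proof. induction n; simpl; [lra|rewrite IHn; lra]. Qed.

Lemma fsum_minus n f g : fsum n (fun i => f i - g i) = fsum n f - fsum n g.
Proof. induction n; simpl; [lra|rewrite IHn; lra]. Qed.

Lemma fsum_scal n c f : fsum n (fun i => c * f i) = c * fsum n f.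
Proof. induction n; simpl; [lra|rewrite IHn; lra]. Qed.

Lemma fsum_scal_r n c f : fsum n (fun i => f i * c) = fsum n f * c.
Proof. induction n; simpl; [lra|rewrite IHn; lra]. Qed.

Lemma fsum_zero n : fsum n (fun _ => 0) = 0.
Proof. induction n; simpl; [lra|rewrite IHn; lra]. Qed.

Lemma fsum_const n c : fsum n (fun _ => c) = INR n * c.
Proof. induction n; simpl fsum; [simpl; lra|rewrite IHn, S_INR; lra]. Qed.

Lemma fsum_le n f g : (forall i, (i < n)%nat -> f i <= g i) -> fsum n f <= fsum n g.
Proof. induction n; simpl; intros H; [lra|]. assert (f n <= g n) by (apply H; lia).
 assert (fsum n f <= fsum n g) by (apply IHn; intros; apply H; lia). lra. Qed.

Lemma fsum_nonneg n f : (forall i, (i < n)%nat -> 0 <= f i) -> 0 <= fsum n f.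
Proof. intros H. rewrite <- (fsum_zero n). apply fsum_le; auto. Qed.

Lemma fsum_abs n f : Rabs (fsum n f) <= fsum n (fun i => Rabs (f i)).
Proof. induction n; simpl. rewrite Rabs_R0; lra.
 eapply Rle_trans; [apply Rabs_triang|]. lra. Qed.

Lemma fsum_swap n m (f : nat -> nat -> R) :
  fsum n (fun i => fsum m (fun j => f i j)) = fsum m (fun j => fsum n (fun i => f i j)).
Proof. induction n; simpl. rewrite fsum_zero; auto.
 rewrite IHn, <- fsum_plus. auto. Qed.

Lemma fsum_term_le n f j : (forall i, (i < n)%nat -> 0 <= f i) -> (j < n)%nat -> f j <= fsum n f.
Proof. induction n; intros H Hj; simpl; [lia|].
 assert (0 <= fsum n f) by (apply fsum_nonneg; intros; apply H; lia).
 destruct (Nat.eq_dec j n). subst; lra.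
 assert (f j <= fsum n f) by (apply IHn; [intros; apply H; lia|lia]).
 assert (0 <= f n) by (apply H; lia). lra. Qed.

Lemma kron_eq i : kron i i = 1.
Proof. unfold kron. rewrite Nat.eqb_refl; auto. Qed.
Lemma kron_neq i j : i <> j -> kron i j = 0.
Proof. unfold kron. intros H. apply Nat.eqb_neq in H. rewrite H; auto. Qed.
Lemma kron_nonneg i j : 0 <= kron i j.
Proof. unfold kron; destruct (Nat.eqb i j); lra. Qed.

Lemma fsum_kron_l n j f : (j < n)%nat -> fsum n (fun i => kron i j * f i) = f j.
Proof. induction n; intros Hj; simpl; [lia|].
 destruct (Nat.eq_dec j n).
 - subst. rewrite kron_eq. rewrite (fsum_ext _ _ (fun _ => 0)). rewrite fsum_zero; lra.
   intros i Hi. rewrite kron_neq by lia. lra.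
 - rewrite IHn by lia. rewrite kron_neq by lia. lra. Qed.

Lemma fsum_kron_r n j f : (j < n)%nat -> fsum n (fun i => f i * kron i j) = f j.
Proof. intros. rewrite <- (fsum_kron_l n j f) by auto. apply fsum_ext; intros; lra. Qed.

Fixpoint argmax (f : nat -> R) (m : nat) : nat :=
  match m with O => O | S m' => let j := argmax f m' in
    if Rle_dec (f m') (f j) then j else m' end.

Lemma argmax_spec f m : (0 < m)%nat -> (argmax f m < m)%nat /\ forall i, (i < m)%nat -> f i <= f (argmax f m).
Proof. induction m; intros Hm; [lia|]. simpl.
 destruct m as [|m'].
 - simpl. destruct (Rle_dec (f 0%nat) (f 0%nat)); split; try lia; intros i Hi; replace i with 0%nat by lia; lra.
 - destruct IHm as [H1 H2]; [lia|]. remember (argmax f (S m')) as j.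
   destruct (Rle_dec (f (S m')) (f j)).
   + split; [lia|]. intros i Hi. destruct (Nat.eq_dec i (S m')); [subst; lra|apply H2; lia].
   + split; [lia|]. intros i Hi. destruct (Nat.eq_dec i (S m')); [subst; lra|].
     assert (f i <= f j) by (apply H2; lia). lra. Qed.

Lemma pos_min n f : (forall i, (i < n)%nat -> 0 < f i) -> exists c, 0 < c /\ forall i, (i < n)%nat -> c <= f i.
Proof. induction n; intros H. exists 1; split; [lra|intros; lia].
 destruct IHn as [c [Hc Hc2]]. intros; apply H; lia.
 exists (Rmin c (f n)). split. apply Rmin_pos; auto; apply H; lia.
 intros i Hi. destruct (Nat.eq_dec i n). subst; apply Rmin_r.
 eapply Rle_trans; [apply Rmin_l|apply Hc2; lia]. Qed.

Lemma Rabs_le_inv x c : Rabs x <= c -> - c <= x <= c.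
Proof. unfold Rabs; destruct (Rcase_abs x); intros; lra. Qed.

Definition conv (u : nat -> R) (l : R) := Un_cv (fun n => sum_f_R0 u n) l.

Lemma Lim_unique u l : Un_cv u l -> Lim u = l.
Proof. intros H. unfold Lim.
 assert (H2 : Un_cv u (epsilon (inhabits 0) (fun l => Un_cv u l))).
 { apply (epsilon_spec (inhabits 0) (fun l => Un_cv u l)). exists l; auto. }
 eapply UL_sequence; eauto. Qed.

Lemma conv_sum u l : conv u l -> series_sum u = l.
Proof. intros H; apply Lim_unique; auto. Qed.

Lemma conv_ext u v l : (forall n, u n = v n) -> conv u l -> conv v l.
Proof. intros He H eps Heps. destruct (H eps Heps) as [N HN]. exists N; intros n Hn.
 rewrite <- (sum_eq u v) by auto. apply HN; auto. Qed.

Lemma conv_plus u v a b : conv u a -> conv v b -> conv (fun n => u n + v n) (a + b).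
Proof. intros Hu Hv. eapply (conv_ext (fun n => u n + v n)); [reflexivity|].
 unfold conv. eapply Un_cv_ext. 2: apply (CV_plus _ _ _ _ Hu Hv).
 intros n; simpl. rewrite plus_sum; auto. Qed.

Lemma CV_const' c : Un_cv (fun _ => c) c.
Proof. intros eps He. exists O. intros. unfold R_dist. rewrite Rminus_diag, Rabs_R0; auto. Qed.

Lemma conv_scal u a c : conv u a -> conv (fun n => c * u n) (c * a).
Proof. intros Hu. unfold conv. eapply Un_cv_ext. 2: apply (CV_mult (fun _ => c) _ c a (CV_const' c) Hu).
 intros n; simpl. rewrite scal_sum. apply sum_eq; intros; ring. Qed.

Lemma conv_minus u v a b : conv u a -> conv v b -> conv (fun n => u n - v n) (a - b).
Proof. intros Hu Hv. unfold conv. eapply Un_cv_ext. 2: apply (CV_minus _ _ _ _ Hu Hv).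
 intros n; simpl. rewrite minus_sum; auto. Qed.

Lemma conv_zero : conv (fun _ => 0) 0.
Proof. eapply Un_cv_ext. 2: apply (CV_const' 0). intros n. induction n; simpl; auto; lra. Qed.

Lemma conv_fsum k (u : nat -> nat -> R) (l : nat -> R) :
  (forall i, (i < k)%nat -> conv (u i) (l i)) -> conv (fun n => fsum k (fun i => u i n)) (fsum k l).
Proof. induction k; intros H; simpl. apply conv_zero.
 apply conv_plus; auto. Qed.

Lemma conv_unique u a b : conv u a -> conv u b -> a = b.
Proof. apply UL_sequence. Qed.

Lemma conv_le u v a b : (forall n, u n <= v n) -> conv u a -> conv v b -> a <= b.
Proof. intros H Hu Hv. apply (@Rle_cv_lim (fun n => sum_f_R0 u n) (fun n => sum_f_R0 v n) a b (fun n => sum_Rle u v n (fun k _ => H k)) Hu Hv). Qed.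

Lemma conv_shift u l : conv u l -> conv (fun n => u (S n)) (l - u O).
Proof. intros H eps He. destruct (H eps He) as [N HN]. exists N. intros n Hn.
 unfold R_dist. specialize (HN (S n) ltac:(lia)). unfold R_dist in HN.
 rewrite (decomp_sum u (S n)) in HN by lia. simpl pred in HN.
 replace (sum_f_R0 (fun n0 => u (S n0)) n - (l - u 0%nat)) with
   (u 0%nat + sum_f_R0 (fun i : nat => u (S i)) n - l) by ring. auto. Qed.

Section G.
Variable g : R.
Hypothesis Hg : 0 < g < 1.

Lemma conv_geom : conv (fun n => g ^ n) (/ (1 - g)).
Proof. pose proof (GP_infinite g ltac:(rewrite Rabs_right; lra)) as H.
 intros eps He. destruct (H eps He) as [N HN]. exists N. intros n Hn.
 specialize (HN n Hn). rewrite (sum_eq _ (fun i => 1 * g ^ i)); auto. intros; ring. Qed.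

Lemma conv_geom_exists (x : nat -> R) C : (forall n, Rabs (x n) <= C) ->
  exists l, conv (fun n => g ^ n * x n) l.
Proof. intros H.
 assert (HC : 0 <= C) by (eapply Rle_trans; [apply Rabs_pos|apply (H O)]).
 destruct (Rseries_CV_comp (fun n => g ^ n * (x n + C)) (fun n => (2 * C) * g ^ n)) as [l Hl].
 - intros n. pose proof (H n) as Hn. apply Rabs_le_inv in Hn.
   pose proof (pow_le g n ltac:(lra)). split; [apply Rmult_le_pos; lra|]. nra.
 - exists (2 * C * / (1 - g)). apply conv_scal. apply conv_geom.
 - exists (l - C * / (1 - g)). eapply conv_ext. 2: apply (conv_minus _ _ _ _ Hl (conv_scal _ _ C conv_geom)).
   intros n; simpl; ring. Qed.

Lemma conv_bound (x : nat -> R) C l : (forall n, Rabs (x n) <= C) ->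
  conv (fun n => g ^ n * x n) l -> Rabs l <= C / (1 - g).
Proof. intros H Hl. apply Rabs_le. split.
 - replace (- (C / (1 - g))) with ((-C) * / (1 - g)) by (unfold Rdiv; ring).
   eapply conv_le. 2: apply (conv_scal _ _ (-C) conv_geom). 2: apply Hl.
   intros n; simpl. pose proof (H n) as Hn. apply Rabs_le_inv in Hn. pose proof (pow_le g n ltac:(lra)). nra.
 - eapply conv_le. 2: apply Hl. 2: apply (conv_scal _ _ C conv_geom).
   intros n; simpl. pose proof (H n) as Hn. apply Rabs_le_inv in Hn. pose proof (pow_le g n ltac:(lra)). nra.
Qed.

Lemma conv_nonneg (x : nat -> R) l : (forall n, 0 <= x n) ->
  conv (fun n => g ^ n * x n) l -> 0 <= l.
Proof. intros H Hl. eapply conv_le. 2: apply conv_zero. 2: apply Hl.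
 intros n; pose proof (pow_le g n ltac:(lra)); specialize (H n); nra. Qed.

Lemma conv_gshift (x : nat -> R) l : conv (fun n => g ^ n * x n) l ->
  exists l', conv (fun n => g ^ n * x (S n)) l' /\ l = x O + g * l'.
Proof. intros H. apply conv_shift in H. simpl in H.
 exists (/ g * (l - 1 * x O)). split.
 - eapply conv_ext. 2: apply (conv_scal _ _ (/ g) H). intros n; simpl. field. lra.
 - field. lra. Qed.

End G.

Lemma fsum_swap4 n1 m1 n2 m2 (F : nat -> nat -> nat -> nat -> R) :
  fsum n1 (fun i => fsum m1 (fun j => fsum n2 (fun k => fsum m2 (fun l => F i j k l)))) =
  fsum n2 (fun k => fsum m2 (fun l => fsum n1 (fun i => fsum m1 (fun j => F i j k l)))).
Proof.
 transitivity (fsum n1 (fun i => fsum n2 (fun k => fsum m1 (fun j => fsum m2 (fun l => F i j k l))))).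
 apply fsum_ext; intros; apply fsum_swap.
 rewrite fsum_swap. apply fsum_ext; intros k _.
 transitivity (fsum n1 (fun i => fsum m2 (fun l => fsum m1 (fun j => F i j k l)))).
 apply fsum_ext; intros; apply fsum_swap. apply fsum_swap. Qed.

Lemma fsum_scal2 n1 m1 c (F : nat -> nat -> R) :
  c * fsum n1 (fun i => fsum m1 (fun j => F i j)) = fsum n1 (fun i => fsum m1 (fun j => c * F i j)).
Proof. rewrite <- fsum_scal. apply fsum_ext; intros. rewrite fsum_scal; auto. Qed.
Lemma fsum_scal2_r n1 m1 c (F : nat -> nat -> R) :
  fsum n1 (fun i => fsum m1 (fun j => F i j)) * c = fsum n1 (fun i => fsum m1 (fun j => F i j * c)).
Proof. rewrite <- fsum_scal_r. apply fsum_ext; intros. rewrite fsum_scal_r; auto. Qed.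

Lemma conv_scal_r u a c : conv u a -> conv (fun n => u n * c) (a * c).
Proof. intros H. eapply conv_ext. 2: { rewrite Rmult_comm. apply (conv_scal _ _ c H). } intros; simpl; ring. Qed.

Section MDPsec.
Variable M : MDP.
Hypothesis HM : mdp_wf M.
Local Notation n := (nS M).
Local Notation m := (nA M).
Local Notation g := (mgamma M).

Lemma g_bounds : 0 < g < 1.
Proof. destruct HM as [Hq _]. exact Hq. Qed.
Lemma P_nonneg s a s' : (s < n)%nat -> (a < m)%nat -> (s' < n)%nat -> 0 <= mP M s a s'.
Proof. intros. destruct HM as [_ [_ [_ Hq]]]. apply (Hq s a); auto. Qed.
Lemma P_sum s a : (s < n)%nat -> (a < m)%nat -> fsum n (mP M s a) = 1.
Proof. intros. destruct HM as [_ [_ [_ Hq]]]. apply (Hq s a); auto. Qed.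
Lemma rho0_pos s : (s < n)%nat -> 0 < mrho0 M s.
Proof. destruct HM as [_ [Hq _]]. apply Hq. Qed.
Lemma rho0_sum : fsum n (mrho0 M) = 1.
Proof. destruct HM as [_ [_ [Hq _]]]. apply Hq. Qed.

Definition nonnegm (mu : nat -> nat -> R) := forall s a, (s < n)%nat -> (a < m)%nat -> 0 <= mu s a.
Definition mass (mu : nat -> nat -> R) := fsum n (fun s => fsum m (mu s)).
Definition ax (pi : policy) (mu : nat -> nat -> R) (t : nat) :=
  fsum n (fun s => fsum m (fun a => sa_dist M pi mu t s a * mr M s a)).
Definition Rmx := fsum n (fun s => fsum m (fun a => Rabs (mr M s a))).

Lemma Rmx_bound s a : (s < n)%nat -> (a < m)%nat -> Rabs (mr M s a) <= Rmx.
Proof. intros. unfold Rmx. eapply Rle_trans.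
 2: apply (fsum_term_le n (fun s => fsum m (fun a => Rabs (mr M s a))) s); auto.
 apply (fsum_term_le m (fun a => Rabs (mr M s a))); auto. intros; apply Rabs_pos.
 intros; apply fsum_nonneg; intros; apply Rabs_pos. Qed.

Lemma Rmx_nonneg : 0 <= Rmx.
Proof. unfold Rmx; apply fsum_nonneg; intros; apply fsum_nonneg; intros; apply Rabs_pos. Qed.

Section Pol.
Variable pi : policy.
Hypothesis Hpi : is_policy M pi.

Lemma pi_nonneg s a : (s < n)%nat -> (a < m)%nat -> 0 <= pi s a.
Proof. intros. apply Hpi; auto. Qed.
Lemma pi_sum s : (s < n)%nat -> fsum m (pi s) = 1.
Proof. intros. apply Hpi; auto. Qed.

Lemma sa_nonneg mu t : nonnegm mu -> nonnegm (sa_dist M pi mu t).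
Proof. intros H. induction t; simpl; auto. intros s a Hs Ha.
 apply Rmult_le_pos. apply pi_nonneg; auto.
 apply fsum_nonneg; intros; apply fsum_nonneg; intros. apply Rmult_le_pos. apply IHt; auto. apply P_nonneg; auto. Qed.

Lemma sa_mass mu t : mass (sa_dist M pi mu t) = mass mu.
Proof. induction t; simpl; auto. rewrite <- IHt. unfold mass.
 transitivity (fsum n (fun s' => fsum n (fun s => fsum m (fun a => sa_dist M pi mu t s a * mP M s a s')))).
 - apply fsum_ext; intros s' Hs'. rewrite fsum_scal_r. rewrite pi_sum; auto. ring.
 - rewrite fsum_swap. apply fsum_ext; intros s Hs. rewrite fsum_swap. apply fsum_ext; intros a Ha.
   rewrite fsum_scal. rewrite P_sum; auto. ring. Qed.

Lemma ax_bound mu t : nonnegm mu -> Rabs (ax pi mu t) <= Rmx * mass mu.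
Proof. intros H. unfold ax. eapply Rle_trans. apply fsum_abs.
 rewrite <- (sa_mass mu t). unfold mass. rewrite <- fsum_scal. apply fsum_le; intros s Hs.
 eapply Rle_trans. apply fsum_abs. rewrite <- fsum_scal. apply fsum_le; intros a Ha.
 rewrite Rabs_mult. pose proof (sa_nonneg mu t H s a Hs Ha).
 rewrite (Rabs_right (sa_dist M pi mu t s a)) by lra. pose proof (Rmx_bound s a Hs Ha).
 pose proof (Rabs_pos (mr M s a)). nra. Qed.

Lemma ret_conv mu : nonnegm mu -> conv (fun t => g ^ t * ax pi mu t) (ret M pi mu).
Proof. intros H. destruct (conv_geom_exists g g_bounds (ax pi mu) (Rmx * mass mu)) as [l Hl].
 intros; apply ax_bound; auto.
 unfold ret. fold g. replace (series_sum _) with l. auto.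
 symmetry. apply conv_sum. eapply conv_ext; [|apply Hl]. intros; reflexivity. Qed.

Lemma ret_bound mu : nonnegm mu -> Rabs (ret M pi mu) <= Rmx * mass mu / (1 - g).
Proof. intros H. eapply conv_bound. apply g_bounds. 2: apply ret_conv; auto.
 intros; apply ax_bound; auto. Qed.

Lemma sa_shift mu t : sa_dist M pi mu (S t) = sa_dist M pi (sa_dist M pi mu 1) t.
Proof. induction t. reflexivity. change (sa_dist M pi mu (S (S t))) with
  (fun s' a' => pi s' a' * fsum (nS M) (fun s => fsum (nA M) (fun a =>
                   sa_dist M pi mu (S t) s a * mP M s a s'))).
 rewrite IHt. reflexivity. Qed.

Lemma ret_bellman mu : nonnegm mu -> ret M pi mu = ax pi mu O + g * ret M pi (sa_dist M pi mu 1).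
Proof. intros H. destruct (conv_gshift g g_bounds _ _ (ret_conv mu H)) as [l' [Hl' E]].
 rewrite E. f_equal. f_equal. eapply conv_unique. apply Hl'.
 eapply conv_ext. 2: apply ret_conv. intros t. unfold ax. rewrite (sa_shift mu t). reflexivity.
 apply sa_nonneg; auto. Qed.

Definition dlt (s0 a0 : nat) : nat -> nat -> R := fun s' a' => kron s' s0 * kron a' a0.

Lemma dlt_nonneg s0 a0 : nonnegm (dlt s0 a0).
Proof. intros s a _ _. unfold dlt. apply Rmult_le_pos; apply kron_nonneg. Qed.

Lemma sa_lin mu t s a : (s < n)%nat -> (a < m)%nat ->
  sa_dist M pi mu t s a = fsum n (fun s0 => fsum m (fun a0 => mu s0 a0 * sa_dist M pi (dlt s0 a0) t s a)).
Proof. revert s a. induction t; intros s a Hs Ha.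
 - simpl. unfold dlt. symmetry. transitivity (fsum n (fun s0 => kron s0 s * mu s0 a)).
   + apply fsum_ext; intros s0 Hs0.
     rewrite (fsum_ext _ _ (fun a0 => kron a0 a * (kron s0 s * mu s0 a0))).
     apply (fsum_kron_l m a (fun a0 => kron s0 s * mu s0 a0)); auto. intros a0 _. unfold kron; rewrite (Nat.eqb_sym a a0), (Nat.eqb_sym s s0). ring.
   + apply (fsum_kron_l n s (fun s0 => mu s0 a)); auto.
 - simpl. transitivity (fsum n (fun s1 => fsum m (fun a1 => fsum n (fun s0 => fsum m (fun a0 =>
      pi s a * (mu s0 a0 * sa_dist M pi (dlt s0 a0) t s1 a1 * mP M s1 a1 s)))))).
   + rewrite fsum_scal2. apply fsum_ext; intros s1 Hs1. apply fsum_ext; intros a1 Ha1.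
     rewrite IHt by auto. rewrite fsum_scal2_r, fsum_scal2. reflexivity.
   + rewrite fsum_swap4. apply fsum_ext; intros s0 Hs0. apply fsum_ext; intros a0 Ha0.
     rewrite fsum_scal2, fsum_scal2. apply fsum_ext; intros; apply fsum_ext; intros; ring. Qed.

Lemma ret_lin mu : nonnegm mu ->
  ret M pi mu = fsum n (fun s => fsum m (fun a => mu s a * Qf M pi s a)).
Proof. intros H. eapply conv_unique. apply ret_conv; auto.
 eapply conv_ext. 2: { apply conv_fsum. intros s0 Hs0. apply conv_fsum. intros a0 Ha0.
   apply conv_scal. unfold Qf. apply ret_conv. apply dlt_nonneg. }
 intros t. simpl. symmetry. unfold ax. rewrite fsum_scal2.
 transitivity (fsum n (fun s => fsum m (fun a => fsum n (fun s0 => fsum m (fun a0 =>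
   g ^ t * (mu s0 a0 * sa_dist M pi (dlt s0 a0) t s a * mr M s a)))))).
 - apply fsum_ext; intros s Hs. apply fsum_ext; intros a Ha.
   rewrite sa_lin by auto. rewrite fsum_scal2_r, fsum_scal2. apply fsum_ext; intros; apply fsum_ext; intros; ring.
 - rewrite fsum_swap4. apply fsum_ext; intros s0 Hs0. apply fsum_ext; intros a0 Ha0.
   rewrite fsum_scal2, fsum_scal2. unfold dlt. apply fsum_ext; intros; apply fsum_ext; intros; ring. Qed.
End Pol.
End MDPsec.

Section C.
Variable M : MDP.
Hypothesis HM : mdp_wf M.
Local Notation n := (nS M).
Local Notation m := (nA M).
Local Notation g := (mgamma M).

Lemma mass_dlt s a : (s < n)%nat -> (a < m)%nat -> mass M (dlt s a) = 1.
Proof. intros. unfold mass, dlt.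
 rewrite (fsum_ext _ _ (fun s0 => kron s0 s * 1)). rewrite (fsum_kron_l n s (fun _ => 1)); auto.
 intros s0 _. rewrite fsum_scal. f_equal. transitivity (fsum m (fun i => kron i a * 1)).
 apply fsum_ext; intros; ring. apply (fsum_kron_l m a (fun _ => 1)); auto. Qed.

Section Pol.
Variable pi : policy.
Hypothesis Hpi : is_policy M pi.

Lemma Q_bound s a : (s < n)%nat -> (a < m)%nat -> Rabs (Qf M pi s a) <= Rmx M / (1 - g).
Proof. intros. unfold Qf. eapply Rle_trans. apply (ret_bound M HM pi Hpi). apply dlt_nonneg.
 change (fun s' a' => kron s' s * kron a' a) with (dlt s a). rewrite mass_dlt by auto. right; field.
 pose proof (g_bounds M HM); lra. Qed.

Lemma V_eq s : (s < n)%nat -> Vf M pi s = fsum m (fun a => pi s a * Qf M pi s a).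
Proof. intros Hs. unfold Vf. rewrite (ret_lin M HM pi Hpi).
 - rewrite (fsum_ext _ _ (fun s0 => kron s0 s * fsum m (fun a => pi s a * Qf M pi s0 a))).
   apply (fsum_kron_l n s (fun s0 => fsum m (fun a => pi s a * Qf M pi s0 a))); auto.
   intros; rewrite <- fsum_scal; apply fsum_ext; intros; ring.
 - intros s0 a0 _ Ha0. apply Rmult_le_pos. apply kron_nonneg. apply Hpi; auto. Qed.

Lemma eta_eq : eta M pi = fsum n (fun s => mrho0 M s * Vf M pi s).
Proof. unfold eta. rewrite (ret_lin M HM pi Hpi).
 - apply fsum_ext; intros s Hs. rewrite V_eq by auto. rewrite <- fsum_scal. apply fsum_ext; intros. unfold init_sa; ring.
 - intros s0 a0 Hs0 Ha0. unfold init_sa. apply Rmult_le_pos. left; apply (rho0_pos M HM); auto. apply Hpi; auto. Qed.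

Lemma Q_bellman s a : (s < n)%nat -> (a < m)%nat ->
  Qf M pi s a = mr M s a + g * fsum n (fun s' => mP M s a s' * Vf M pi s').
Proof. intros Hs Ha. unfold Qf. change (fun s' a' => kron s' s * kron a' a) with (dlt s a).
 rewrite (ret_bellman M HM pi Hpi) by apply dlt_nonneg. f_equal.
 - unfold ax. simpl. unfold dlt.
   rewrite (fsum_ext _ _ (fun s0 => kron s0 s * mr M s0 a)).
   apply (fsum_kron_l n s (fun s0 => mr M s0 a)); auto.
   intros s0 _. rewrite (fsum_ext _ _ (fun a0 => kron a0 a * (kron s0 s * mr M s0 a0))).
   rewrite (fsum_kron_l m a (fun a0 => kron s0 s * mr M s0 a0)); auto. intros; ring.
 - f_equal. rewrite (ret_lin M HM pi Hpi).
   + apply fsum_ext; intros s' Hs'. rewrite V_eq by auto. rewrite <- fsum_scal. apply fsum_ext; intros a' Ha'.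
     simpl. unfold dlt.
     assert (E : fsum n (fun s0 => fsum m (fun a0 => kron s0 s * kron a0 a * mP M s0 a0 s')) = mP M s a s').
     { rewrite (fsum_ext _ _ (fun s0 => kron s0 s * mP M s0 a s')).
       apply (fsum_kron_l n s (fun s0 => mP M s0 a s')); auto.
       intros s0 _. rewrite (fsum_ext _ _ (fun a0 => kron a0 a * (kron s0 s * mP M s0 a0 s'))).
       apply (fsum_kron_l m a (fun a0 => kron s0 s * mP M s0 a0 s')); auto. intros; ring. }
     rewrite E. ring.
   + apply sa_nonneg; auto. apply dlt_nonneg. Qed.

Lemma sum_adv s : (s < n)%nat -> fsum m (fun a => pi s a * Adv M pi s a) = 0.
Proof. intros Hs. unfold Adv. rewrite (fsum_ext _ _ (fun a => pi s a * Qf M pi s a - pi s a * Vf M pi s)).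
 rewrite fsum_minus, fsum_scal_r, pi_sum, <- V_eq by auto. ring. intros; ring. Qed.

Lemma V_bound s : (s < n)%nat -> Rabs (Vf M pi s) <= Rmx M / (1 - g).
Proof. intros Hs. rewrite V_eq by auto. eapply Rle_trans. apply fsum_abs.
 replace (Rmx M / (1 - g)) with (fsum m (fun a => pi s a * (Rmx M / (1 - g)))).
 apply fsum_le; intros a Ha. rewrite Rabs_mult. rewrite (Rabs_right (pi s a)) by (apply Rle_ge, Hpi; auto).
 apply Rmult_le_compat_l. apply Hpi; auto. apply Q_bound; auto.
 rewrite fsum_scal_r, pi_sum by auto. ring. Qed.

Lemma Adv_bound s a : (s < n)%nat -> (a < m)%nat -> Rabs (Adv M pi s a) <= 2 * (Rmx M / (1 - g)).
Proof. intros. unfold Adv. replace (Qf M pi s a - Vf M pi s) with (Qf M pi s a + - Vf M pi s) by ring. eapply Rle_trans. apply Rabs_triang. rewrite Rabs_Ropp.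
 pose proof (Q_bound s a H H0). pose proof (V_bound s H). set (Z := Rmx M / (1 - g)) in *. lra. Qed.

Lemma eta_bound : Rabs (eta M pi) <= Rmx M / (1 - g).
Proof. unfold eta. eapply Rle_trans. apply (ret_bound M HM pi Hpi).
 intros s a Hs Ha. unfold init_sa. apply Rmult_le_pos. left; apply (rho0_pos M HM); auto. apply Hpi; auto.
 replace (mass M (init_sa M pi)) with 1. right; field. pose proof (g_bounds M HM); lra.
 unfold mass, init_sa. rewrite <- (rho0_sum M HM) by auto. apply fsum_ext; intros s Hs.
 rewrite fsum_scal, pi_sum by auto. ring. Qed.

Definition Kp (s s' : nat) := fsum m (fun a => pi s a * mP M s a s').

Lemma d_eq t s a : (s < n)%nat -> sa_dist M pi (init_sa M pi) t s a = pi s a * state_prob M pi t s.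
Proof. intros Hs. unfold state_prob. destruct t; simpl.
 - unfold init_sa. rewrite fsum_scal, pi_sum by auto. ring.
 - rewrite fsum_scal_r, pi_sum by auto. ring. Qed.

Lemma sp_rec t s' : (s' < n)%nat -> state_prob M pi (S t) s' = fsum n (fun s => state_prob M pi t s * Kp s s').
Proof. intros Hs'. unfold state_prob at 1. simpl. rewrite fsum_scal_r, pi_sum by auto.
 rewrite Rmult_1_l. apply fsum_ext; intros s Hs. unfold Kp. rewrite <- fsum_scal. apply fsum_ext; intros a Ha.
 rewrite d_eq by auto. ring. Qed.

Lemma init_nonneg : nonnegm M (init_sa M pi).
Proof. intros s a Hs Ha. unfold init_sa. apply Rmult_le_pos. left; apply (rho0_pos M HM); auto. apply Hpi; auto. Qed.

Lemma sp_nonneg t s : (s < n)%nat -> 0 <= state_prob M pi t s.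
Proof. intros. unfold state_prob. apply fsum_nonneg; intros. apply sa_nonneg; auto. apply init_nonneg. Qed.

Lemma sp_sum t : fsum n (state_prob M pi t) = 1.
Proof. unfold state_prob. change (mass M (sa_dist M pi (init_sa M pi) t) = 1).
 rewrite sa_mass by auto. unfold mass, init_sa. rewrite <- (rho0_sum M HM) by auto. apply fsum_ext; intros s Hs.
 rewrite fsum_scal, pi_sum by auto. ring. Qed.

Lemma sp_le1 t s : (s < n)%nat -> state_prob M pi t s <= 1.
Proof. intros. rewrite <- (sp_sum t). apply (fsum_term_le n (state_prob M pi t)); auto.
 intros; apply sp_nonneg; auto. Qed.

Lemma rho_conv s : (s < n)%nat -> conv (fun t => g ^ t * state_prob M pi t s) (rho_vis M pi s).
Proof. intros Hs. destruct (conv_geom_exists g (g_bounds M HM) (fun t => state_prob M pi t s) 1) as [l Hl].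
 intros t. rewrite Rabs_right. apply sp_le1; auto. apply Rle_ge, sp_nonneg; auto.
 unfold rho_vis. replace (series_sum _) with l; auto. symmetry; apply conv_sum; auto. Qed.

Lemma rho_rec s' : (s' < n)%nat -> rho_vis M pi s' = mrho0 M s' + g * fsum n (fun s => rho_vis M pi s * Kp s s').
Proof. intros Hs'. destruct (conv_gshift g (g_bounds M HM) _ _ (rho_conv s' Hs')) as [l' [Hl' E]].
 rewrite E. f_equal.
 - unfold state_prob; simpl. unfold init_sa. rewrite fsum_scal, pi_sum by auto. ring.
 - f_equal. eapply conv_unique. apply Hl'.
   eapply conv_ext. 2: { apply conv_fsum. intros s Hs. apply conv_scal_r. apply rho_conv; auto. }
   intros t. simpl. rewrite sp_rec by auto. rewrite <- fsum_scal. apply fsum_ext; intros; ring. Qed.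

Lemma rho_nonneg s : (s < n)%nat -> 0 <= rho_vis M pi s.
Proof. intros Hs. eapply conv_nonneg. apply (g_bounds M HM). 2: apply rho_conv; auto.
 intros; apply sp_nonneg; auto. Qed.

Lemma Kp_nonneg s s' : (s < n)%nat -> (s' < n)%nat -> 0 <= Kp s s'.
Proof. intros. unfold Kp. apply fsum_nonneg; intros. apply Rmult_le_pos. apply Hpi; auto. apply (P_nonneg M HM); auto. Qed.

Lemma Kp_sum s : (s < n)%nat -> fsum n (Kp s) = 1.
Proof. intros. unfold Kp. rewrite fsum_swap. rewrite <- (pi_sum M pi Hpi s) by auto. apply fsum_ext; intros.
 rewrite fsum_scal, (P_sum M HM) by auto. ring. Qed.

Lemma rho_ge s : (s < n)%nat -> mrho0 M s <= rho_vis M pi s.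
Proof. intros. rewrite rho_rec by auto. pose proof (g_bounds M HM).
 assert (0 <= fsum n (fun s0 => rho_vis M pi s0 * Kp s0 s)).
 apply fsum_nonneg; intros. apply Rmult_le_pos. apply rho_nonneg; auto. apply Kp_nonneg; auto. nra. Qed.

Lemma rho_sum : fsum n (rho_vis M pi) = / (1 - g).
Proof. eapply conv_unique. 2: apply (conv_geom g (g_bounds M HM)).
 eapply conv_ext. 2: { apply conv_fsum. intros s Hs. apply rho_conv; auto. }
 intros t. simpl. rewrite fsum_scal, sp_sum. ring. Qed.

Lemma eta_occ : eta M pi = fsum n (fun s => rho_vis M pi s * fsum m (fun a => pi s a * mr M s a)).
Proof. eapply conv_unique. unfold eta. apply ret_conv; auto. apply init_nonneg.
 eapply conv_ext. 2: { apply conv_fsum. intros s Hs. apply conv_scal_r. apply rho_conv; auto. }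
 intros t. simpl. unfold ax. rewrite <- fsum_scal. apply fsum_ext; intros s Hs.
 transitivity (g ^ t * (state_prob M pi t s * fsum m (fun a => pi s a * mr M s a))); [ring|]. f_equal. rewrite <- fsum_scal. apply fsum_ext; intros a Ha. rewrite d_eq by auto. ring. Qed.

End Pol.
End C.

Section D.
Variable M : MDP.
Hypothesis HM : mdp_wf M.
Local Notation n := (nS M).
Local Notation m := (nA M).
Local Notation g := (mgamma M).

Lemma perf_diff pi p : is_policy M pi -> is_policy M p ->
  eta M p - eta M pi = fsum n (fun s => rho_vis M p s * fsum m (fun a => p s a * Adv M pi s a)).
Proof. intros Hpi Hp.
 assert (S1 : forall s, (s < n)%nat -> fsum m (fun a => p s a * Adv M pi s a) =
   fsum m (fun a => p s a * mr M s a) + g * fsum n (fun s' => Kp M p s s' * Vf M pi s') - Vf M pi s).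
 { intros s Hs. unfold Adv.
   rewrite (fsum_ext _ _ (fun a => p s a * mr M s a + (g * (p s a * fsum n (fun s' => mP M s a s' * Vf M pi s')) - p s a * Vf M pi s))).
   2: { intros a Ha. rewrite (Q_bellman M HM pi Hpi) by auto. ring. }
   rewrite fsum_plus, fsum_minus, fsum_scal, fsum_scal_r, (pi_sum M p Hp) by auto.
   unfold Kp.
   assert (E : fsum m (fun i => p s i * fsum n (fun s' => mP M s i s' * Vf M pi s')) =
     fsum n (fun s' => fsum m (fun a => p s a * mP M s a s') * Vf M pi s')).
   { rewrite (fsum_ext _ _ (fun a => fsum n (fun s' => p s a * mP M s a s' * Vf M pi s'))).
     2: { intros; rewrite <- fsum_scal; apply fsum_ext; intros; ring. }
     rewrite fsum_swap. apply fsum_ext; intros. rewrite fsum_scal_r. auto. }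
   rewrite E. ring. }
 rewrite (fsum_ext _ _ (fun s => rho_vis M p s * fsum m (fun a => p s a * mr M s a) +
    (g * fsum n (fun s' => rho_vis M p s * Kp M p s s' * Vf M pi s') - rho_vis M p s * Vf M pi s))).
 2: { intros s Hs. rewrite S1 by auto.
      replace (fsum n (fun s' => rho_vis M p s * Kp M p s s' * Vf M pi s')) with (rho_vis M p s * fsum n (fun s' => Kp M p s s' * Vf M pi s')). ring.
      rewrite <- fsum_scal; apply fsum_ext; intros; ring. }
 rewrite fsum_plus, fsum_minus, <- (eta_occ M HM p Hp).
 rewrite fsum_scal, fsum_swap.
 rewrite (fsum_ext _ _ (fun s' => (rho_vis M p s' - mrho0 M s') / g * Vf M pi s')).
 2: { intros s' Hs'. rewrite fsum_scal_r. rewrite (rho_rec M HM p Hp s') by auto.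
      field. pose proof (g_bounds M HM); lra. }
 rewrite (eta_eq M HM pi Hpi).
 assert (E : fsum n (fun s' => (rho_vis M p s' - mrho0 M s') / g * Vf M pi s') =
   / g * (fsum n (fun s' => rho_vis M p s' * Vf M pi s') - fsum n (fun s' => mrho0 M s' * Vf M pi s'))).
 { rewrite <- fsum_minus, <- fsum_scal. apply fsum_ext; intros; unfold Rdiv; ring. }
 rewrite E. field. pose proof (g_bounds M HM); lra. Qed.

Lemma n_pos : (0 < n)%nat.
Proof. destruct n eqn:E; [|lia]. pose proof (rho0_sum M HM) as H. rewrite E in H. simpl in H. lra. Qed.

Lemma m_pos pi : is_policy M pi -> (0 < m)%nat.
Proof. intros Hpi. pose proof (pi_sum M pi Hpi 0 n_pos) as H. destruct m; [simpl in H; lra|lia]. Qed.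

Definition jstar pi s := argmax (Adv M pi s) m.
Definition gp (pi : policy) : policy := fun s a => kron a (jstar pi s).

Section P.
Variable pi : policy.
Hypothesis Hpi : is_policy M pi.

Lemma jstar_spec s : (jstar pi s < m)%nat /\ forall a, (a < m)%nat -> Adv M pi s a <= Adv M pi s (jstar pi s).
Proof. apply argmax_spec. apply (m_pos pi Hpi). Qed.

Lemma gp_policy : is_policy M (gp pi).
Proof. intros s Hs. split. intros; apply kron_nonneg. unfold gp.
 transitivity (fsum m (fun a => kron a (jstar pi s) * 1)). apply fsum_ext; intros; ring.
 apply (fsum_kron_l m (jstar pi s) (fun _ => 1)). apply jstar_spec. Qed.

Lemma gp_val s : (s < n)%nat -> fsum m (fun a => gp pi s a * Adv M pi s a) = Adv M pi s (jstar pi s).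
Proof. intros. unfold gp. apply (fsum_kron_l m (jstar pi s) (Adv M pi s)). apply jstar_spec. Qed.

Lemma greedy_le p s : is_policy M p -> (s < n)%nat -> fsum m (fun a => p s a * Adv M pi s a) <= Adv M pi s (jstar pi s).
Proof. intros Hp Hs. transitivity (fsum m (fun a => p s a * Adv M pi s (jstar pi s))).
 apply fsum_le; intros a Ha. apply Rmult_le_compat_l. apply Hp; auto. apply jstar_spec; auto.
 rewrite fsum_scal_r, (pi_sum M p Hp) by auto. lra. Qed.

Lemma jstar_nonneg s : (s < n)%nat -> 0 <= Adv M pi s (jstar pi s).
Proof. intros Hs. rewrite <- (sum_adv M HM pi Hpi s Hs). apply greedy_le; auto. Qed.

Lemma PolAdv_self : PolAdv M pi pi = 0.
Proof. unfold PolAdv. rewrite (fsum_ext _ _ (fun _ => 0)). apply fsum_zero.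
 intros s Hs. rewrite (sum_adv M HM pi Hpi s Hs). ring. Qed.

Lemma PolAdv_le_gp p : is_policy M p -> PolAdv M pi p <= PolAdv M pi (gp pi).
Proof. intros Hp. unfold PolAdv. apply fsum_le; intros s Hs. apply Rmult_le_compat_l.
 apply (rho_nonneg M HM pi Hpi); auto. rewrite gp_val by auto. apply greedy_le; auto. Qed.

Lemma Astar_eq : Astar M pi = PolAdv M pi (gp pi) /\ forall p, is_policy M p -> PolAdv M pi p <= Astar M pi.
Proof.
 assert (H : (exists pi', is_policy M pi' /\ PolAdv M pi pi' = Astar M pi) /\
    (forall pi', is_policy M pi' -> PolAdv M pi pi' <= Astar M pi)).
 { unfold Astar. apply (epsilon_spec (inhabits 0) (fun v =>
    (exists pi', is_policy M pi' /\ PolAdv M pi pi' = v) /\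
    (forall pi', is_policy M pi' -> PolAdv M pi pi' <= v))).
   exists (PolAdv M pi (gp pi)). split. exists (gp pi); split; auto; apply gp_policy.
   intros; apply PolAdv_le_gp; auto. }
 destruct H as [[q [Hq E]] H2]. split; auto.
 apply Rle_antisym. rewrite <- E. apply PolAdv_le_gp; auto. apply H2. apply gp_policy. Qed.

Lemma Astar_nonneg : 0 <= Astar M pi.
Proof. rewrite <- PolAdv_self. apply Astar_eq; auto. Qed.
End P.

Lemma rho0_min : exists c0, 0 < c0 /\ forall s, (s < n)%nat -> c0 <= mrho0 M s.
Proof. apply pos_min. intros; apply (rho0_pos M HM); auto. Qed.

Lemma rho_le pi s : is_policy M pi -> (s < n)%nat -> rho_vis M pi s <= / (1 - g).
Proof. intros. rewrite <- (rho_sum M HM pi) by auto. apply (fsum_term_le n (rho_vis M pi)); auto.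
 intros; apply (rho_nonneg M HM pi); auto. Qed.

Lemma gap_bound c0 pi p : 0 < c0 -> (forall s, (s < n)%nat -> c0 <= mrho0 M s) ->
  is_policy M pi -> is_policy M p -> eta M p - eta M pi <= Astar M pi / ((1 - g) * c0).
Proof. intros Hc0 Hc Hpi Hp. pose proof (g_bounds M HM) as Hg.
 rewrite (perf_diff pi p Hpi Hp). destruct (Astar_eq pi Hpi) as [E _]. rewrite E. unfold PolAdv.
 unfold Rdiv. rewrite Rmult_comm, <- fsum_scal. apply fsum_le; intros s Hs.
 rewrite gp_val by auto.
 pose proof (greedy_le pi Hpi p s Hp Hs). pose proof (jstar_nonneg pi Hpi s Hs).
 pose proof (rho_nonneg M HM p Hp s Hs). pose proof (rho_le p s Hp Hs).
 pose proof (rho_ge M HM pi Hpi s Hs). pose proof (Hc s Hs).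
 set (J := Adv M pi s (jstar pi s)) in *. set (G := fsum m (fun a => p s a * Adv M pi s a)) in *.
 apply Rle_trans with (rho_vis M p s * J). apply Rmult_le_compat_l; auto.
 assert (rho_vis M p s <= / ((1 - g) * c0) * rho_vis M pi s).
 { apply Rle_trans with (/ (1 - g)); auto. rewrite Rinv_mult.
   replace (/ (1 - g)) with (/ (1 - g) * 1) at 1 by ring. rewrite Rmult_assoc. apply Rmult_le_compat_l.
   left; apply Rinv_0_lt_compat; lra.
   apply Rmult_le_reg_l with c0; auto. rewrite <- Rmult_assoc, Rinv_r by lra. lra. }
 assert (0 <= rho_vis M pi s) by lra. nra. Qed.

Definition mixp (a : R) (pi q : policy) : policy := fun s b => (1 - a) * pi s b + a * q s b.

Lemma mix_policy a pi q : 0 <= a <= 1 -> is_policy M pi -> is_policy M q -> is_policy M (mixp a pi q).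
Proof. intros Ha Hpi Hq s Hs. split.
 intros b Hb. unfold mixp. pose proof (proj1 (Hpi s Hs) b Hb). pose proof (proj1 (Hq s Hs) b Hb). nra.
 unfold mixp. rewrite fsum_plus, fsum_scal, fsum_scal, (pi_sum M pi Hpi), (pi_sum M q Hq) by auto. ring. Qed.

Lemma PolAdv_mix a pi q : is_policy M pi -> PolAdv M pi (mixp a pi q) = a * PolAdv M pi q.
Proof. intros Hpi. unfold PolAdv. rewrite <- fsum_scal. apply fsum_ext; intros s Hs.
 unfold mixp. rewrite (fsum_ext _ _ (fun b => (1 - a) * (pi s b * Adv M pi s b) + a * (q s b * Adv M pi s b))).
 rewrite fsum_plus, fsum_scal, fsum_scal, (sum_adv M HM pi Hpi s Hs). ring. intros; ring. Qed.

Lemma dTV_nonneg p q : 0 <= dTV M p q.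
Proof. unfold dTV. apply Rmult_le_pos. lra. apply fsum_nonneg; intros; apply Rabs_pos. Qed.

Lemma avgTV_mix a pi q : 0 <= a -> avgTV M pi (mixp a pi q) = a * avgTV M pi q.
Proof. intros Ha. unfold avgTV. rewrite <- fsum_scal. apply fsum_ext; intros s Hs. unfold dTV, mixp.
 rewrite (fsum_ext _ _ (fun b => a * Rabs (pi s b - q s b))). rewrite fsum_scal. ring.
 intros b Hb. replace (pi s b - ((1 - a) * pi s b + a * q s b)) with (a * (pi s b - q s b)) by ring.
 rewrite Rabs_mult, Rabs_right by lra. auto. Qed.

Lemma dTV_le1 p q s : is_policy M p -> is_policy M q -> (s < n)%nat -> dTV M (p s) (q s) <= 1.
Proof. intros Hp Hq Hs. unfold dTV. apply Rle_trans with (/ 2 * fsum m (fun b => p s b + q s b)).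
 apply Rmult_le_compat_l. lra. apply fsum_le; intros b Hb.
 pose proof (proj1 (Hp s Hs) b Hb). pose proof (proj1 (Hq s Hs) b Hb).
 unfold Rabs; destruct (Rcase_abs _); lra.
 rewrite fsum_plus, (pi_sum M p Hp), (pi_sum M q Hq) by auto. lra. Qed.

Lemma avgTV_le pi q : is_policy M pi -> is_policy M q -> avgTV M pi q <= / (1 - g).
Proof. intros. unfold avgTV. rewrite <- (rho_sum M HM pi) by auto. apply fsum_le; intros s Hs.
 pose proof (dTV_le1 pi q s H H0 Hs). pose proof (rho_nonneg M HM pi H s Hs). nra. Qed.

Lemma avgTV_nonneg pi q : is_policy M pi -> 0 <= avgTV M pi q.
Proof. intros. unfold avgTV. apply fsum_nonneg; intros. apply Rmult_le_pos. apply (rho_nonneg M HM pi); auto. apply dTV_nonneg. Qed.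

Lemma fsum_abs_diff pi p s : (s < n)%nat -> fsum m (fun a => Rabs (p s a - pi s a)) = 2 * dTV M (pi s) (p s).
Proof. intros. unfold dTV. rewrite (fsum_ext _ _ (fun a => Rabs (pi s a - p s a))). field.
 intros; rewrite Rabs_minus_sym; auto. Qed.

Lemma rho_pert pi p : is_policy M pi -> is_policy M p ->
  fsum n (fun s => Rabs (rho_vis M p s - rho_vis M pi s)) <= 2 * g * avgTV M pi p / (1 - g).
Proof. intros Hpi Hp. pose proof (g_bounds M HM) as Hg.
 set (E := fsum n (fun s => Rabs (rho_vis M p s - rho_vis M pi s))).
 assert (HE : E <= g * E + 2 * g * avgTV M pi p).
 { unfold E at 1.
   apply Rle_trans with (fsum n (fun s' => g * (fsum n (fun s => Rabs (rho_vis M p s - rho_vis M pi s) * Kp M p s s')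
       + fsum n (fun s => rho_vis M pi s * fsum m (fun a => Rabs (p s a - pi s a) * mP M s a s'))))).
   - apply fsum_le; intros s' Hs'. rewrite (rho_rec M HM p Hp s' Hs'), (rho_rec M HM pi Hpi s' Hs').
     replace (mrho0 M s' + g * fsum n (fun s => rho_vis M p s * Kp M p s s') -
        (mrho0 M s' + g * fsum n (fun s => rho_vis M pi s * Kp M pi s s'))) with
       (g * (fsum n (fun s => (rho_vis M p s - rho_vis M pi s) * Kp M p s s') +
             fsum n (fun s => rho_vis M pi s * (Kp M p s s' - Kp M pi s s')))).
     2: { rewrite <- fsum_plus.
          transitivity (g * (fsum n (fun s => rho_vis M p s * Kp M p s s') - fsum n (fun s => rho_vis M pi s * Kp M pi s s'))).
          f_equal. rewrite <- fsum_minus. apply fsum_ext; intros; ring. ring. }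
     rewrite Rabs_mult, (Rabs_right g) by lra. apply Rmult_le_compat_l. lra.
     eapply Rle_trans. apply Rabs_triang. apply Rplus_le_compat.
     + eapply Rle_trans. apply fsum_abs. apply fsum_le; intros s Hs. rewrite Rabs_mult.
       rewrite (Rabs_right (Kp M p s s')). lra. apply Rle_ge, (Kp_nonneg M HM p Hp); auto.
     + eapply Rle_trans. apply fsum_abs. apply fsum_le; intros s Hs. rewrite Rabs_mult.
       rewrite (Rabs_right (rho_vis M pi s)) by (apply Rle_ge, (rho_nonneg M HM pi Hpi); auto).
       apply Rmult_le_compat_l. apply (rho_nonneg M HM pi Hpi); auto.
       unfold Kp. rewrite <- fsum_minus. eapply Rle_trans. apply fsum_abs. apply fsum_le; intros a Ha.
       rewrite <- Rmult_minus_distr_r, Rabs_mult, (Rabs_right (mP M s a s')). lra.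
       apply Rle_ge, (P_nonneg M HM); auto.
   - rewrite fsum_scal, fsum_plus.
     assert (A1 : fsum n (fun s' => fsum n (fun s => Rabs (rho_vis M p s - rho_vis M pi s) * Kp M p s s')) = E).
     { rewrite fsum_swap. unfold E. apply fsum_ext; intros s Hs. rewrite fsum_scal. rewrite (Kp_sum M HM p Hp) by auto. ring. }
     assert (A2 : fsum n (fun s' => fsum n (fun s => rho_vis M pi s * fsum m (fun a => Rabs (p s a - pi s a) * mP M s a s')))
        = 2 * avgTV M pi p).
     { rewrite fsum_swap. unfold avgTV. rewrite <- fsum_scal. apply fsum_ext; intros s Hs.
       rewrite fsum_scal. rewrite fsum_swap.
       rewrite (fsum_ext _ _ (fun a => Rabs (p s a - pi s a))).
       rewrite fsum_abs_diff by auto. ring.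
       intros a Ha. rewrite fsum_scal, (P_sum M HM) by auto. ring. }
     rewrite A1, A2. lra. }
 apply Rmult_le_reg_l with (1 - g). lra. unfold Rdiv. rewrite (Rmult_comm (2 * g * avgTV M pi p)), <- Rmult_assoc, Rinv_r by lra. lra. Qed.

Lemma dTV_le_avg c0 pi p s : 0 < c0 -> (forall s, (s < n)%nat -> c0 <= mrho0 M s) -> is_policy M pi -> (s < n)%nat ->
  dTV M (pi s) (p s) <= avgTV M pi p / c0.
Proof. intros Hc0 Hc Hpi Hs. apply Rmult_le_reg_l with c0; auto. unfold Rdiv.
 rewrite (Rmult_comm (avgTV M pi p)), <- Rmult_assoc, Rinv_r, Rmult_1_l by lra.
 apply Rle_trans with (rho_vis M pi s * dTV M (pi s) (p s)).
 apply Rmult_le_compat_r. apply dTV_nonneg. eapply Rle_trans. apply (Hc s Hs). apply (rho_ge M HM pi Hpi s Hs).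
 unfold avgTV. apply (fsum_term_le n (fun s => rho_vis M pi s * dTV M (pi s) (p s))); auto.
 intros; apply Rmult_le_pos. apply (rho_nonneg M HM pi); auto. apply dTV_nonneg. Qed.

Lemma approx c0 pi p : 0 < c0 -> (forall s, (s < n)%nat -> c0 <= mrho0 M s) -> is_policy M pi -> is_policy M p ->
  Rabs (eta M p - Lsur M pi p) <= (4 * g * (2 * (Rmx M / (1 - g))) / ((1 - g) * c0)) * (avgTV M pi p * avgTV M pi p).
Proof. intros Hc0 Hc Hpi Hp. pose proof (g_bounds M HM) as Hg.
 set (Am := 2 * (Rmx M / (1 - g))).
 assert (HAm : 0 <= Am). { unfold Am. pose proof (Rmx_nonneg M). apply Rmult_le_pos. lra. apply Rmult_le_pos; auto. left; apply Rinv_0_lt_compat; lra. }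
 set (G := fun s => fsum m (fun a => p s a * Adv M pi s a)).
 set (T := avgTV M pi p). assert (HT : 0 <= T) by (apply avgTV_nonneg; auto).
 assert (E1 : eta M p - Lsur M pi p = fsum n (fun s => (rho_vis M p s - rho_vis M pi s) * G s)).
 { unfold Lsur. replace (eta M p - (eta M pi + PolAdv M pi p)) with ((eta M p - eta M pi) - PolAdv M pi p) by ring.
   rewrite (perf_diff pi p Hpi Hp). unfold PolAdv. rewrite <- fsum_minus. apply fsum_ext; intros; unfold G; ring. }
 assert (HG : forall s, (s < n)%nat -> Rabs (G s) <= 2 * Am * T / c0).
 { intros s Hs. unfold G.
   rewrite (fsum_ext _ _ (fun a => (p s a - pi s a) * Adv M pi s a + pi s a * Adv M pi s a)) by (intros; ring).
   rewrite fsum_plus, (sum_adv M HM pi Hpi s Hs), Rplus_0_r.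
   eapply Rle_trans. apply fsum_abs.
   apply Rle_trans with (fsum m (fun a => Rabs (p s a - pi s a) * Am)).
   apply fsum_le; intros a Ha. rewrite Rabs_mult. apply Rmult_le_compat_l. apply Rabs_pos. apply (Adv_bound M HM pi Hpi); auto.
   rewrite fsum_scal_r, fsum_abs_diff by auto. pose proof (dTV_le_avg c0 pi p s Hc0 Hc Hpi Hs).
   pose proof (dTV_nonneg (pi s) (p s)). unfold T. unfold Rdiv in *. nra. }
 rewrite E1. eapply Rle_trans. apply fsum_abs.
 apply Rle_trans with (fsum n (fun s => Rabs (rho_vis M p s - rho_vis M pi s)) * (2 * Am * T / c0)).
 rewrite <- fsum_scal_r. apply fsum_le; intros s Hs. rewrite Rabs_mult. apply Rmult_le_compat_l. apply Rabs_pos. auto.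
 pose proof (rho_pert pi p Hpi Hp) as HR. fold T in HR.
 assert (0 <= 2 * Am * T / c0). { unfold Rdiv. apply Rmult_le_pos. nra. left; apply Rinv_0_lt_compat; lra. }
 eapply Rle_trans. apply Rmult_le_compat_r. auto. apply HR.
 right. field. split; lra. Qed.
End D.

Lemma nat_unbounded x : exists i : nat, x < INR i.
Proof. destruct (archimed x) as [H1 _]. destruct (Z_le_gt_dec (up x) 0).
 - exists O. simpl. apply Rlt_le_trans with (IZR (up x)); auto. apply IZR_le in l. simpl in l. lra.
 - exists (Z.to_nat (up x)). rewrite INR_IZR_INZ, Z2Nat.id by lia. lra. Qed.

Lemma avgTV_self M pi : avgTV M pi pi = 0.
Proof. unfold avgTV, dTV. rewrite (fsum_ext _ _ (fun _ => 0)). apply fsum_zero.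
 intros. rewrite (fsum_ext _ _ (fun _ => 0)). rewrite fsum_zero. ring.
 intros. rewrite Rminus_diag, Rabs_R0. auto. Qed.

Section E.
Variable M : MDP.
Hypothesis HM : mdp_wf M.
Local Notation n := (nS M).
Local Notation m := (nA M).
Local Notation g := (mgamma M).
Variables b0 b1 g1 g2 g3 d0 : R.
Hypothesis Hb : 0 < b0 /\ b0 < b1 /\ b1 < 1.
Hypothesis Hgg : 0 < g3 /\ g3 < g2 /\ g2 <= 1 /\ 1 < g1.
Hypothesis Hd0 : 0 < d0.
Variable pi0 : policy.
Hypothesis Hpi0 : is_policy M pi0.
Variables pik pit : nat -> policy.
Variable delta : nat -> R.
Hypothesis Hrun : trust_region_run M b0 b1 g1 g2 g3 d0 pi0 pik pit delta.

Definition rk k := ratio M (pik k) (pit k).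
Definition Dk k := PolAdv M (pik k) (pit k).

Lemma step k : subproblem_solution M (pik k) (delta k) (pit k) /\
    (b0 <= rk k -> pik (S k) = pit k) /\
    (rk k < b0 -> pik (S k) = pik k) /\
    (b1 <= rk k -> delta (S k) = g1 * delta k) /\
    (b0 <= rk k < b1 -> delta (S k) = g2 * delta k) /\
    (rk k < b0 -> delta (S k) = g3 * delta k).
Proof. destruct Hrun as [_ [_ H]]. apply H. Qed.

Lemma inv_all k : is_policy M (pik k) /\ 0 < delta k.
Proof. induction k.
 - destruct Hrun as [E1 [E2 _]]. rewrite E1, E2. auto.
 - destruct IHk as [IH1 IH2]. destruct (step k) as [[Hs _] [S1 [S2 [S3 [S4 S5]]]]].
   destruct (Rlt_le_dec (rk k) b0).
   + rewrite S2, S5 by auto. split; auto. apply Rmult_lt_0_compat; lra.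
   + rewrite S1 by auto. split; auto. destruct (Rlt_le_dec (rk k) b1).
     * rewrite S4 by lra. apply Rmult_lt_0_compat; lra.
     * rewrite S3 by lra. apply Rmult_lt_0_compat; lra. Qed.

Lemma pik_pol k : is_policy M (pik k). Proof. apply inv_all. Qed.
Lemma delta_pos k : 0 < delta k. Proof. apply inv_all. Qed.
Lemma pit_pol k : is_policy M (pit k). Proof. apply (step k). Qed.

Lemma Dk_ge k q : is_policy M q -> avgTV M (pik k) q <= delta k -> PolAdv M (pik k) q <= Dk k.
Proof. intros Hq Ht. destruct (step k) as [[_ [_ Hopt]] _]. pose proof (Hopt q Hq Ht). unfold Lsur in H. unfold Dk. lra. Qed.

Lemma Dk_nonneg k : 0 <= Dk k.
Proof. rewrite <- (PolAdv_self M HM (pik k) (pik_pol k)). apply Dk_ge. apply pik_pol.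
 rewrite avgTV_self. left; apply delta_pos. Qed.

Lemma rk_eq k : rk k = (eta M (pit k) - eta M (pik k)) / Dk k.
Proof. unfold rk, ratio, Lsur, Dk. rewrite (PolAdv_self M HM (pik k) (pik_pol k)). f_equal. ring. Qed.

Lemma success_gain k : b0 <= rk k -> 0 < Dk k /\ eta M (pik (S k)) - eta M (pik k) >= b0 * Dk k.
Proof. intros H. destruct (step k) as [_ [S1 _]]. rewrite S1 by auto.
 pose proof (Dk_nonneg k). destruct (Req_dec (Dk k) 0) as [E|NE].
 - rewrite rk_eq, E in H. unfold Rdiv in H. rewrite Rinv_0, Rmult_0_r in H. lra.
 - assert (0 < Dk k) by lra. split; auto. rewrite rk_eq in H.
   apply Rle_ge. apply Rmult_le_reg_r with (/ Dk k). apply Rinv_0_lt_compat; auto.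
   rewrite Rmult_assoc, Rinv_r by lra. lra. Qed.

Lemma eta_step k : eta M (pik k) <= eta M (pik (S k)).
Proof. destruct (Rlt_le_dec (rk k) b0).
 - destruct (step k) as [_ [_ [S2 _]]]. rewrite S2 by auto. lra.
 - destruct (success_gain k r). assert (0 <= b0 * Dk k) by (apply Rmult_le_pos; lra). lra. Qed.

Lemma eta_mono k j : (k <= j)%nat -> eta M (pik k) <= eta M (pik j).
Proof. induction 1. lra. eapply Rle_trans; [apply IHle|apply eta_step]. Qed.

Lemma Dk_mix k : Rmin 1 (delta k * (1 - g)) * Astar M (pik k) <= Dk k.
Proof. pose proof (g_bounds M HM) as Hg. set (a := Rmin 1 (delta k * (1 - g))).
 assert (Ha : 0 <= a <= 1). { split. apply Rmin_glb. lra. pose proof (delta_pos k). nra. apply Rmin_l. }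
 destruct (Astar_eq M HM (pik k) (pik_pol k)) as [E _]. rewrite E.
 rewrite <- (PolAdv_mix M HM a (pik k) (gp M (pik k)) (pik_pol k)).
 apply Dk_ge. apply mix_policy; auto. apply pik_pol. apply (gp_policy M HM); apply pik_pol.
 rewrite avgTV_mix by lra. pose proof (avgTV_le M HM (pik k) (gp M (pik k)) (pik_pol k) (gp_policy M HM _ (pik_pol k))).
 pose proof (avgTV_nonneg M HM (pik k) (gp M (pik k)) (pik_pol k)).
 apply Rle_trans with (a * / (1 - g)). apply Rmult_le_compat_l; lra.
 assert (a <= delta k * (1 - g)) by apply Rmin_r.
 apply Rmult_le_reg_r with (1 - g). lra. rewrite Rmult_assoc, Rinv_l by lra. lra. Qed.

Section F.
Variable c0 : R.
Hypothesis Hc0 : 0 < c0.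
Hypothesis Hc : forall s, (s < n)%nat -> c0 <= mrho0 M s.
Definition KK := 4 * g * (2 * (Rmx M / (1 - g))) / ((1 - g) * c0) + 1.

Lemma KK_pos : 0 < KK.
Proof. pose proof (g_bounds M HM). pose proof (Rmx_nonneg M). unfold KK.
 assert (0 <= 4 * g * (2 * (Rmx M / (1 - g))) / ((1 - g) * c0)); [|lra].
 unfold Rdiv. repeat apply Rmult_le_pos; try lra; left; apply Rinv_0_lt_compat; nra. Qed.

Lemma approx_k k : eta M (pit k) - eta M (pik k) >= Dk k - KK * (delta k * delta k).
Proof. pose proof (approx M HM c0 (pik k) (pit k) Hc0 Hc (pik_pol k) (pit_pol k)) as H.
 unfold Lsur in H. fold (Dk k) in H. apply Rabs_le_inv in H.
 pose proof (avgTV_nonneg M HM (pik k) (pit k) (pik_pol k)).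
 destruct (step k) as [[_ [Ht _]] _].
 set (T := avgTV M (pik k) (pit k)) in *.
 assert (T * T <= delta k * delta k) by nra.
 assert (HK0 : 0 <= 4 * g * (2 * (Rmx M / (1 - g))) / ((1 - g) * c0)).
 { pose proof (Rmx_nonneg M). pose proof (g_bounds M HM).
   unfold Rdiv. repeat apply Rmult_le_pos; try lra; left; apply Rinv_0_lt_compat; nra. }
 unfold KK. set (K0 := 4 * g * (2 * (Rmx M / (1 - g))) / ((1 - g) * c0)) in *.
 assert (0 <= delta k * delta k) by nra. nra. Qed.

Section Contra.
Variable eps : R.
Hypothesis Heps : 0 < eps.
Variable N : nat.
Hypothesis HN : forall k, (N <= k)%nat -> eps <= Astar M (pik k).

Definition dbar := Rmin (/ (1 - g)) ((1 - b1) * (1 - g) * eps / KK).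

Lemma dbar_pos : 0 < dbar.
Proof. pose proof (g_bounds M HM). pose proof KK_pos. unfold dbar. apply Rmin_pos.
 apply Rinv_0_lt_compat; lra. unfold Rdiv. apply Rmult_lt_0_compat. apply Rmult_lt_0_compat. nra. auto.
 apply Rinv_0_lt_compat; auto. Qed.

Lemma small_success k : (N <= k)%nat -> delta k <= dbar -> b1 <= rk k.
Proof. intros Hk Hd. pose proof (g_bounds M HM) as Hg. pose proof (delta_pos k) as Hdp. pose proof KK_pos.
 assert (Hw : delta k * (1 - g) <= 1).
 { assert (delta k <= / (1 - g)) by (eapply Rle_trans; [apply Hd|apply Rmin_l]).
   apply Rmult_le_reg_r with (/ (1 - g)). apply Rinv_0_lt_compat; lra.
   rewrite Rmult_assoc, Rinv_r by lra. lra. }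
 assert (HD : delta k * (1 - g) * eps <= Dk k).
 { pose proof (Dk_mix k). rewrite Rmin_right in H0 by lra. pose proof (HN k Hk).
   assert (0 <= delta k * (1 - g)) by nra. nra. }
 assert (Hd2 : KK * delta k <= (1 - b1) * (1 - g) * eps).
 { assert (delta k <= (1 - b1) * (1 - g) * eps / KK) by (eapply Rle_trans; [apply Hd|apply Rmin_r]).
   apply Rmult_le_reg_r with (/ KK). apply Rinv_0_lt_compat; auto.
   rewrite (Rmult_comm KK), Rmult_assoc, Rinv_r, Rmult_1_r by lra. auto. }
 pose proof (approx_k k) as HA.
 assert (HDp : 0 < Dk k). { assert (0 < delta k * (1 - g) * eps) by (apply Rmult_lt_0_compat; nra). lra. }
 assert (Hnum : b1 * Dk k <= eta M (pit k) - eta M (pik k)).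
 { assert (KK * (delta k * delta k) <= (1 - b1) * Dk k).
   { rewrite <- Rmult_assoc. apply Rle_trans with ((1 - b1) * (1 - g) * eps * delta k).
     apply Rmult_le_compat_r; lra. nra. }
   lra. }
 rewrite rk_eq. apply Rmult_le_reg_r with (Dk k); auto. unfold Rdiv. rewrite Rmult_assoc, Rinv_l by lra. lra. Qed.

Definition dlow := Rmin (delta N) (g3 * dbar).

Lemma dlow_pos : 0 < dlow.
Proof. unfold dlow. apply Rmin_pos. apply delta_pos. pose proof dbar_pos. apply Rmult_lt_0_compat; lra. Qed.

Lemma delta_low j : dlow <= delta (N + j).
Proof. induction j. rewrite Nat.add_0_r. apply Rmin_l.
 replace (N + S j)%nat with (S (N + j)) by lia. set (k := (N + j)%nat) in *.
 pose proof (delta_pos k). destruct (step k) as [_ [_ [_ [S3 [S4 S5]]]]].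
 destruct (Rle_lt_dec (delta k) dbar).
 - assert (b1 <= rk k) by (apply small_success; auto; unfold k; lia). rewrite S3 by auto. nra.
 - assert (dlow <= g3 * dbar) by apply Rmin_r. pose proof dbar_pos.
   destruct (Rlt_le_dec (rk k) b0). rewrite S5 by auto. nra.
   destruct (Rlt_le_dec (rk k) b1). rewrite S4 by lra. nra. rewrite S3 by lra. nra. Qed.

Lemma delta_low' k : (N <= k)%nat -> dlow <= delta k.
Proof. intros. replace k with (N + (k - N))%nat by lia. apply delta_low. Qed.

Definition cgain := b0 * (Rmin 1 (dlow * (1 - g)) * eps).

Lemma cgain_pos : 0 < cgain.
Proof. unfold cgain. pose proof dlow_pos. pose proof (g_bounds M HM). apply Rmult_lt_0_compat. lra.
 apply Rmult_lt_0_compat; auto. apply Rmin_pos. lra. nra. Qed.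

Lemma gain k : (N <= k)%nat -> b0 <= rk k -> eta M (pik k) + cgain <= eta M (pik (S k)).
Proof. intros Hk Hr. destruct (success_gain k Hr) as [HD Hg2]. pose proof (Dk_mix k). pose proof (HN k Hk).
 pose proof (delta_low' k Hk). pose proof (g_bounds M HM).
 assert (Rmin 1 (dlow * (1 - g)) <= Rmin 1 (delta k * (1 - g))).
 { apply Rmin_glb. apply Rmin_l. eapply Rle_trans. apply Rmin_r. nra. }
 assert (0 <= Rmin 1 (dlow * (1 - g))). { apply Rmin_glb. lra. pose proof dlow_pos. nra. }
 assert (Rmin 1 (dlow * (1 - g)) * eps <= Dk k) by nra.
 unfold cgain. nra. Qed.

Lemma eventually_success k : (N <= k)%nat -> exists j, (k <= j)%nat /\ b0 <= rk j.
Proof. intros Hk. apply NNPP. intros Hno.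
 assert (Hf : forall j, (k <= j)%nat -> rk j < b0).
 { intros j Hj. destruct (Rlt_le_dec (rk j) b0); auto. exfalso; apply Hno; exists j; auto. }
 assert (Hpow : forall i, delta (k + i)%nat = g3 ^ i * delta k).
 { induction i. rewrite Nat.add_0_r. simpl; ring. replace (k + S i)%nat with (S (k + i)) by lia.
   destruct (step (k + i)%nat) as [_ [_ [_ [_ [_ S5]]]]]. rewrite S5 by (apply Hf; lia). rewrite IHi. simpl. ring. }
 pose proof (delta_pos k). pose proof dbar_pos.
 destruct (pow_lt_1_zero g3 ltac:(rewrite Rabs_right; lra) (dbar / delta k) ltac:(unfold Rdiv; apply Rmult_lt_0_compat; auto; apply Rinv_0_lt_compat; auto)) as [i Hi].
 specialize (Hi i (Nat.le_refl i)). rewrite Rabs_right in Hi by (apply Rle_ge, pow_le; lra).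
 assert (delta (k + i)%nat <= dbar).
 { rewrite Hpow. apply Rmult_le_reg_r with (/ delta k). apply Rinv_0_lt_compat; auto.
   rewrite Rmult_assoc, Rinv_r by lra. unfold Rdiv in Hi. lra. }
 assert (b1 <= rk (k + i)%nat) by (apply small_success; auto; lia).
 specialize (Hf (k + i)%nat ltac:(lia)). lra. Qed.

Lemma grow i : exists k, (N <= k)%nat /\ eta M (pik N) + INR i * cgain <= eta M (pik k).
Proof. induction i. exists N. split; auto. simpl. lra.
 destruct IHi as [k [Hk Hi]]. destruct (eventually_success k Hk) as [j [Hj Hr]].
 exists (S j). split. lia. pose proof (gain j ltac:(lia) Hr). pose proof (eta_mono k j Hj).
 rewrite S_INR. lra. Qed.

Lemma contra : False.
Proof. pose proof cgain_pos. pose proof (g_bounds M HM).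
 destruct (nat_unbounded (2 * (Rmx M / (1 - g)) / cgain)) as [i Hi].
 destruct (grow i) as [k [Hk Hg]].
 pose proof (eta_bound M HM (pik k) (pik_pol k)). pose proof (eta_bound M HM (pik N) (pik_pol N)).
 apply Rabs_le_inv in H1. apply Rabs_le_inv in H2.
 assert (2 * (Rmx M / (1 - g)) < INR i * cgain).
 { apply Rmult_lt_reg_r with (/ cgain). apply Rinv_0_lt_compat; auto.
   replace (INR i * cgain * / cgain) with (INR i) by (field; lra). unfold Rdiv in Hi. lra. }
 lra. Qed.
End Contra.

Lemma liminf_part eps : 0 < eps -> forall N, exists k, (N <= k)%nat /\ Astar M (pik k) < eps.
Proof. intros He N. apply NNPP. intros Hno. apply (contra eps He N).
 intros k Hk. destruct (Rlt_le_dec (Astar M (pik k)) eps); auto. exfalso. apply Hno. exists k; auto. Qed.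
End F.
End E.


Theorem mainTheorem4 (M : MDP) (HM : mdp_wf M)
  (b0 b1 g1 g2 g3 d0 : R)
  (Hb : 0 < b0 /\ b0 < b1 /\ b1 < 1)
  (Hg : 0 < g3 /\ g3 < g2 /\ g2 <= 1 /\ 1 < g1)
  (Hd0 : 0 < d0)
  (pi0 : policy) (Hpi0 : is_policy M pi0)
  (pik pit : nat -> policy) (delta : nat -> R)
  (Hrun : trust_region_run M b0 b1 g1 g2 g3 d0 pi0 pik pit delta)
  (Hpos : forall k, 0 < Astar M (pik k)) :
  liminf_is (fun k => Astar M (pik k)) 0 /\
  (forall pistar, optimal_policy M pistar ->
     Un_cv (fun k => eta M (pik k)) (eta M pistar)).
Proof.
 destruct (rho0_min M HM) as [c0 [Hc0 Hc]].
 pose proof (g_bounds M HM) as Hgam.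
 assert (LP : forall eps, 0 < eps -> forall N, exists k, (N <= k)%nat /\ Astar M (pik k) < eps).
 { intros eps He N. exact (liminf_part M HM b0 b1 g1 g2 g3 d0 Hb Hg Hd0 pi0 Hpi0 pik pit delta Hrun c0 Hc0 Hc eps He N). }
 split.
 - intros eps He. split.
   + exists O. intros k _. pose proof (Hpos k). lra.
   + intros N. destruct (LP eps He N) as [k [Hk Ha]]. exists k. split; auto. lra.
 - intros pistar [Hps Hopt] e He.
   assert (He' : 0 < e * ((1 - mgamma M) * c0) / 2).
   { unfold Rdiv. apply Rmult_lt_0_compat; [apply Rmult_lt_0_compat|]; nra. }
   destruct (LP _ He' O) as [k0 [_ Hk0]].
   pose proof (pik_pol M b0 b1 g1 g2 g3 d0 Hg Hd0 pi0 Hpi0 pik pit delta Hrun k0) as Hp0.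
   pose proof (gap_bound M HM c0 (pik k0) pistar Hc0 Hc Hp0 Hps) as Hgap.
   assert (Hq : Astar M (pik k0) / ((1 - mgamma M) * c0) < e / 2).
   { apply Rmult_lt_reg_r with ((1 - mgamma M) * c0). nra.
     unfold Rdiv. rewrite Rmult_assoc, Rinv_l by nra. unfold Rdiv in Hk0. lra. }
   exists k0. intros k Hk. unfold R_dist.
   pose proof (eta_mono M HM b0 b1 g1 g2 g3 d0 Hb Hg Hd0 pi0 Hpi0 pik pit delta Hrun k0 k Hk).
   pose proof (Hopt (pik k) (pik_pol M b0 b1 g1 g2 g3 d0 Hg Hd0 pi0 Hpi0 pik pit delta Hrun k)).
   rewrite Rabs_left1 by lra. lra.
Qed.
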